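(* Let $n\geq 1$ and let $\phi$ be a variable-free formula with modalities among $[0],\dots,[n]$. Let $\overline{\phi}$ be the formula obtained from $\phi$ by replacing every subformula of the form $[n]\psi$ by $\top$. If $\mathbf{GLP}\nvdash\langle n\rangle\top\to\neg[0]\phi$, then $\mathbf{GLP}\nvdash\langle n\rangle\top\to\neg[0]\overline{\phi}$.
   Context: $\mathbf{GLP}$ is the propositional polymodal logic with modalities $[0],[1],\dots$ ($\langle k\rangle:=\neg[k]\neg$) axiomatized by classical tautologies; $[k](\phi\to\psi)\to([k]\phi\to[k]\psi)$; $[k]([k]\phi\to\phi)\to[k]\phi$; $\langle j\rangle\phi\to[k]\langle j\rangle\phi$ for $j<k$; $[j]\phi\to[k]\phi$ for $j\leq k$; rules modus ponens and necessitation. Variable-free formulas are built from $\top,\bot$ by boolean connectives and modalities. *)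

(* Defs.v *)
From Stdlib Require Import Arith Bool.

Inductive form : Type :=
| Var : nat -> form
| Bot : form
| Imp : form -> form -> form
| Box : nat -> form -> form.

Definition Neg (a : form) : form := Imp a Bot.
Definition Top : form := Neg Bot.
Definition Dia (k : nat) (a : form) : form := Neg (Box k (Neg a)).

(* Classical tautologies: formulas true under every boolean assignment to
   their propositional atoms, where variables and boxed formulas [k]a are
   treated as atoms. *)
Fixpoint eval (v : form -> bool) (a : form) : bool :=
  match a with
  | Var _ => v a
  | Bot => false
  | Imp b c => implb (eval v b) (eval v c)
  | Box _ _ => v a
  end.

Definition tautology (a : form) : Prop := forall v : form -> bool, eval v a = true.

Inductive GLP_prv : form -> Prop :=
| GLP_taut : forall a, tautology a -> GLP_prv a
| GLP_K : forall k a b, GLP_prv (Imp (Box k (Imp a b)) (Imp (Box k a) (Box k b)))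
| GLP_Lob : forall k a, GLP_prv (Imp (Box k (Imp (Box k a) a)) (Box k a))
| GLP_dia : forall j k a, j < k -> GLP_prv (Imp (Dia j a) (Box k (Dia j a)))
| GLP_mono : forall j k a, j <= k -> GLP_prv (Imp (Box j a) (Box k a))
| GLP_mp : forall a b, GLP_prv (Imp a b) -> GLP_prv a -> GLP_prv b
| GLP_nec : forall k a, GLP_prv a -> GLP_prv (Box k a).

Fixpoint var_free (a : form) : Prop :=
  match a with
  | Var _ => False
  | Bot => True
  | Imp b c => var_free b /\ var_free c
  | Box _ b => var_free b
  end.

Fixpoint mods_le (n : nat) (a : form) : Prop :=
  match a with
  | Var _ => True
  | Bot => True
  | Imp b c => mods_le n b /\ mods_le n c
  | Box k b => k <= n /\ mods_le n b
  end.

Fixpoint bar (n : nat) (a : form) : form :=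
  match a with
  | Var i => Var i
  | Bot => Bot
  | Imp b c => Imp (bar n b) (bar n c)
  | Box k b => if Nat.eqb k n then Top else Box k (bar n b)
  end.

(* Main.v *)
Require Import Defs.
From Stdlib Require Import Arith.

Definition And_ (a b : form) : form := Neg (Imp a (Neg b)).
Definition Iff_ (a b : form) : form := And_ (Imp a b) (Imp b a).

Ltac taut :=
  apply GLP_taut; unfold tautology, Iff_, And_, Dia, Top, Neg in *; intro v; simpl;
  repeat match goal with
         | |- context [eval ?w ?x] => destruct (eval w x)
         | |- context [?w (Box ?k ?x)] => destruct (w (Box k x))
         | |- context [?w (Var ?i)] => destruct (w (Var i))
         end; reflexivity.

Ltac use H := eapply GLP_mp; [| exact H].

Lemma box_mono k a b : GLP_prv (Imp a b) -> GLP_prv (Imp (Box k a) (Box k b)).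
Proof. intro H. eapply GLP_mp. apply GLP_K. apply GLP_nec; exact H. Qed.

Lemma box_mono2 k a b c : GLP_prv (Imp a (Imp b c)) ->
  GLP_prv (Imp (Box k a) (Imp (Box k b) (Box k c))).
Proof.
  intro H. pose proof (box_mono k _ _ H) as H1.
  pose proof (GLP_K k b c) as H2.
  use H2. use H1. taut.
Qed.

Lemma four k a : GLP_prv (Imp (Box k a) (Box k (Box k a))).
Proof.
  set (c := And_ (Box k a) a).
  assert (s1 : GLP_prv (Imp (Box k c) (Box k a))) by (apply box_mono; unfold c; taut).
  assert (s2 : GLP_prv (Imp a (Imp (Box k c) c))) by (use s1; unfold c; taut).
  pose proof (box_mono k _ _ s2) as s3.
  pose proof (GLP_Lob k c) as s4.
  assert (s5 : GLP_prv (Imp (Box k c) (Box k (Box k a)))) by (apply box_mono; unfold c; taut).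
  use s5. use s4. use s3. taut.
Qed.

Section M.
Variable n : nat.
Let B := Box n (Neg Top).

Lemma key chi : mods_le n chi ->
  GLP_prv (Imp B (Imp (Box 0 B) (Iff_ chi (bar n chi)))).
Proof.
  induction chi as [i| |a IHa b IHb|j a IHa]; simpl; intro Hm.
  - taut.
  - taut.
  - destruct Hm as [Ha Hb]. specialize (IHa Ha). specialize (IHb Hb).
    use IHb. use IHa. taut.
  - destruct Hm as [Hj Ha]. specialize (IHa Ha).
    destruct (Nat.eq_dec j n) as [->|Hne].
    + rewrite Nat.eqb_refl.
      assert (f : GLP_prv (Imp B (Box n a))) by (apply box_mono; taut).
      use f. taut.
    + rewrite (proj2 (Nat.eqb_neq j n) Hne).
      pose proof (box_mono2 j _ _ _ IHa) as f1.
      pose proof (GLP_mono 0 j B (Nat.le_0_l j)) as f2.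
      pose proof (four 0 B) as f3a.
      pose proof (GLP_mono 0 j (Box 0 B) (Nat.le_0_l j)) as f3b.
      assert (f4 : GLP_prv (Imp (Box j (Iff_ a (bar n a))) (Imp (Box j a) (Box j (bar n a)))))
        by (apply box_mono2; taut).
      assert (f5 : GLP_prv (Imp (Box j (Iff_ a (bar n a))) (Imp (Box j (bar n a)) (Box j a))))
        by (apply box_mono2; taut).
      use f5. use f4. use f3b. use f3a. use f2. use f1. taut.
Qed.
End M.

Theorem mainTheorem20 (n : nat) (phi : form) :
  1 <= n -> var_free phi -> mods_le n phi ->
  ~ GLP_prv (Imp (Dia n Top) (Neg (Box 0 phi))) ->
  ~ GLP_prv (Imp (Dia n Top) (Neg (Box 0 (bar n phi)))).
Proof.
  intros _ _ Hm Hno H. apply Hno.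
  set (B := Box n (Neg Top)).
  pose proof (key n phi Hm) as K.
  pose proof (box_mono2 0 _ _ _ K) as K0.
  pose proof (four 0 B) as F.
  assert (I : GLP_prv (Imp (Box 0 (Iff_ phi (bar n phi))) (Imp (Box 0 phi) (Box 0 (bar n phi)))))
    by (apply box_mono2; taut).
  assert (G : GLP_prv (Imp (Box 0 phi) (Imp (Box 0 B) B))).
  { use H. use I. use F. use K0. unfold B. taut. }
  pose proof (box_mono 0 _ _ G) as G1.
  pose proof (GLP_Lob 0 B) as L.
  pose proof (four 0 phi) as F2.
  use G. use L. use F2. use G1. unfold B. taut.
Qed.
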